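(* Let $\mathbb{T}(n,p)$ denote the expected number of explored nodes of the branch-and-bound algorithm for minimum dominating set described in the context, run on $G\sim\mathcal{G}(n,p)$. Then: (a) If $p=p(n)$ satisfies $pn\to\infty$ as $n\to\infty$, then $\mathbb{T}(n,p)=2^{o(n)}$ (the algorithm takes subexponential time on average). (b) If $p=c/n$ where $c\ge 20$ is a constant, then there is a constant $\epsilon\ge 0.01$ (independent of $n$) such that $\mathbb{T}(n,p)\le (2-\epsilon)^n$ for all sufficiently large $n$.
   Context: $\mathcal{G}(n,p)$ is the binomial random graph on vertex set $V=\{v_1,\dots,v_n\}$ in which each of the $\binom n2$ possible edges is present independently with probability $p$. A set $S\subseteq V$ is dominating if every vertex is in $S$ or adjacent to a vertex of $S$. Branch-and-bound algorithm: fix the order $v_1,\dots,v_n$. Nodes of the search tree are pairs $(\vec x,\delta)$ with $\delta\in\{0,\dots,n\}$ and $\vec x\in\{0,1\}^n$ with $x_i=1$ for all $i>\delta$; the node represents the vertex set $\{v_i: x_i=1\}$. The root is $((1,\dots,1),0)$. A node $(\vec x,\delta)$ with $\delta<n$ has a left child $(\vec x,\delta+1)$ (i.e. $x_{\delta+1}=1$, vertex $v_{\delta+1}$ kept) and a right child $(\vec x',\delta+1)$ where $\vec x'$ equals $\vec x$ except $x'_{\delta+1}=0$ (vertex $v_{\delta+1}$ removed). A node is feasible if its vertex set is a dominating set of $G$. The score of a node is $u(\vec x,\delta)=|\vec x|-n+\delta$, where $|\vec x|=\sum_i x_i$; equivalently, the number of indices $i\le\delta$ with $x_i=1$. Initially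 the root is explored. At each step, among the feasible nodes that are children of already-explored nodes and have not yet been explored, one with minimum score is explored (ties broken arbitrarily). The algorithm stops as soon as a node of depth $\delta=n$ is explored; its vertex set is returned as a minimum dominating set. The complexity is the number of explored nodes. *)

(* Defs.v *)
From HB Require Import structures.
From Stdlib Require Import Reals.
From mathcomp Require Import all_boot.

(* mathcomp rebinds the %R key; give Stdlib's R_scope the key %Re. *)
Delimit Scope R_scope with Re.

Set Implicit Arguments.
Unset Strict Implicit.
Unset Printing Implicit Defensive.

Definition pairs (n : nat) : {set 'I_n * 'I_n} := [set e : 'I_n * 'I_n | (val e.1 < val e.2)%N].

(* A graph is given by its edge set E, a subset of [pairs n]. *)
Definition adj (n : nat) (E : {set 'I_n * 'I_n}) (u v : 'I_n) : bool :=
  ((u, v) \in E) || ((v, u) \in E).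

Definition dominating (n : nat) (E : {set 'I_n * 'I_n}) (S : {set 'I_n}) : bool :=
  [forall v : 'I_n, (v \in S) || [exists u in S, adj E u v]].

(* A node (x, delta): x is encoded by its vertex set {v_i : x_i = 1}
   (index i-1 in 'I_n), delta in {0,...,n}. *)
Definition node (n : nat) := ({set 'I_n} * 'I_n.+1)%type.

Definition bb_root (n : nat) : node n := ([set: 'I_n], ord0).

(* score u(x,delta) = number of indices i <= delta (1-based) with x_i = 1. *)
Definition score (n : nat) (x : node n) : nat :=
  #|[set i in x.1 | (val i < val x.2)%N]|.

(* y is a child of x: x has depth delta < n, and y is either
   (x, delta+1) (left child) or x with v_{delta+1} removed, depth delta+1
   (right child).  v_{delta+1} has 0-based index delta. *)
Definition is_child (n : nat) (x y : node n) : bool :=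
  [&& (val x.2 < n)%N, val y.2 == (val x.2).+1 &
      (y.1 == x.1) || (y.1 == x.1 :\: [set i : 'I_n | val i == val x.2])].

Definition available (n : nat) (E : {set 'I_n * 'I_n}) (prev : seq (node n))
    (y : node n) : bool :=
  [&& dominating E y.1, y \notin prev & has (fun x => is_child x y) prev].

(* y may be explored next: it is available and of minimum score among the
   available nodes (ties broken arbitrarily). *)
Definition step_ok (n : nat) (E : {set 'I_n * 'I_n}) (prev : seq (node n))
    (y : node n) : bool :=
  available E prev y &&
  [forall z : node n, available E prev z ==> (score y <= score z)%N].

Fixpoint steps_ok (n : nat) (E : {set 'I_n * 'I_n}) (prev rest : seq (node n))
    : bool :=
  match rest with
  | [::] => true
  | y :: rest' => step_ok E prev y && steps_ok E (rcons prev y) rest'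
  end.

(* A complete run of the algorithm: the sequence of explored nodes, starting
   with the root, each subsequent one chosen by the rule above, no node of
   depth n explored before the last one, and the last one of depth n
   (at which point the algorithm stops). *)
Definition complete_run (n : nat) (E : {set 'I_n * 'I_n}) (s : seq (node n))
    : bool :=
  match s with
  | [::] => false
  | r :: rest =>
      [&& r == bb_root n, steps_ok E [:: r] rest,
          all (fun x : node n => (val x.2 < n)%N) (belast r rest) &
          val (last r rest).2 == n]
  end.

(* Number of explored nodes on graph E, for the worst tie-breaking
   (maximum over all complete runs; runs consist of distinct nodes, so their
   length is at most #|node n|). *)
Definition bb_count (n : nat) (E : {set 'I_n * 'I_n}) : nat :=
  \max_(k < #|{: node n}|.+2 | [exists t : k.-tuple (node n), complete_run E t])
     val k.

Definition gnp_prob (n : nat) (p : R) (E : {set 'I_n * 'I_n}) : R :=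
  (pow p #|E| * pow (1 - p) (#|pairs n| - #|E|)%N)%Re.

Definition expect_gnp (n : nat) (p : R) (f : {set 'I_n * 'I_n} -> R) : R :=
  \big[Rplus/0%Re]_(E : {set 'I_n * 'I_n} | E \subset pairs n)
     (gnp_prob p E * f E)%Re.

Definition T_bb (n : nat) (p : R) : R :=
  @expect_gnp n p (fun E => INR (bb_count E)).

(* Main.v *)
Require Import Defs.
From HB Require Import structures.
From Stdlib Require Import Reals.
From mathcomp Require Import all_boot.
From Stdlib Require Import Lra Lia.
From mathcomp Require Import zify.

Set Implicit Arguments.
Unset Strict Implicit.
Unset Printing Implicit Defensive.


Section Det.
Variable n : nat.
Variable E : {set 'I_n * 'I_n}.

Definition reach (x : node n) : bool :=
  [forall i : 'I_n, (val x.2 <= val i)%N ==> (i \in x.1)].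

Definition Pd (D : {set 'I_n}) (d : 'I_n.+1) : node n :=
  (D :|: [set i : 'I_n | (val d <= val i)%N], d).

Lemma dom_sub (D D' : {set 'I_n}) : D \subset D' -> dominating E D -> dominating E D'.
Proof.
move=> sDD' /forallP H; apply/forallP => v; case/orP: (H v) => [vD|].
  by rewrite (subsetP sDD' _ vD).
case/existsP => u /andP[uD auv]; apply/orP; right; apply/existsP; exists u.
by rewrite (subsetP sDD' _ uD).
Qed.

Variable D : {set 'I_n}.
Hypothesis domD : dominating E D.

Lemma Pd0 : Pd D ord0 = bb_root n.
Proof. rewrite /Pd /bb_root; congr pair; apply/setP => i; rewrite !inE /= orbT //. Qed.

Lemma avail_exists (prev : seq (node n)) :
  bb_root n \in prev -> all (fun x : node n => (val x.2 < n)%N) prev ->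
  exists z, available E prev z && (score z <= #|D|)%N.
Proof.
move=> rootp /allP alln.
have P0 : Pd D ord0 \in prev by rewrite Pd0.
case: (@arg_maxnP _ ord0 (fun d : 'I_n.+1 => Pd D d \in prev) (fun d => val d) P0) => d Hd Hmax.
have dn : (val d < n)%N by have := alln _ Hd.
set d' : 'I_n.+1 := Ordinal (dn : (val d).+1 < n.+1)%N.
exists (Pd D d'); apply/andP; split; last first.
  apply: subset_leq_card; apply/subsetP => i; rewrite !inE /= => /andP[/orP[//|]].
  move=> h1 h2; lia.
apply/and3P; split.
- apply: dom_sub domD; exact: subsetUl.
- apply/negP => /Hmax /=; lia.
- apply/hasP; exists (Pd D d) => //; rewrite /is_child /= dn eqxx /=.
  case: (boolP (Ordinal dn \in D)) => iD; apply/orP; [left|right];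
    apply/eqP/setP => i; rewrite !inE.
  * case: (ltngtP (val i) (val d)) => h; rewrite ?orbT ?orbF //.
    by have -> : i = Ordinal dn by apply: val_inj.
  * case: (ltngtP (val i) (val d)) => h; rewrite ?orbT ?orbF ?andbT //=.
    have -> : i = Ordinal dn by apply: val_inj.
    by rewrite (negbTE iD).
Qed.

Definition Inv (L : seq (node n)) : bool :=
  [&& bb_root n \in L, all reach L, all (fun x => score x <= #|D|)%N L & uniq L].

Lemma step_inv prev y : Inv prev -> all (fun x : node n => (val x.2 < n)%N) prev ->
  step_ok E prev y -> Inv (rcons prev y).
Proof.
case/and4P=> rp rch sc un dp /andP[/and3P[domy ynp /hasP[x xp chxy]] /forallP mn].
have [z /andP[az sz]] := avail_exists rp dp.
have syz := implyP (mn z) az.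
rewrite /Inv mem_rcons in_cons rp orbT /= !all_rcons rch sc rcons_uniq ynp un.
rewrite (leq_trans syz sz) !andbT /=.
move/allP: rch => /(_ x xp) /forallP rx.
case/and3P: chxy => xn /eqP ey hy.
apply/forallP => i; apply/implyP => yi.
have xi : (val x.2 <= val i)%N by rewrite ey in yi; apply: ltnW.
have := implyP (rx i) xi.
case/orP: hy => /eqP ->; rewrite ?inE // => ->; rewrite andbT.
by rewrite ey in yi; rewrite neq_ltn yi orbT.
Qed.

Lemma steps_inv rest : forall prev x0, steps_ok E (rcons prev x0) rest ->
  all (fun x : node n => (val x.2 < n)%N) (prev ++ belast x0 rest) ->
  Inv (rcons prev x0) -> Inv (rcons prev x0 ++ rest).
Proof.
elim: rest => [|y rest IH] prev x0 /=; first by move=> _ _; rewrite cats0.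
case/andP => st sts; rewrite all_cat /= => /and3P[dp dx0 dr] Iv.
rewrite -cat_rcons; apply: IH => //.
  by rewrite all_cat all_rcons dx0 dp dr.
apply: step_inv => //; by rewrite all_rcons dx0 dp.
Qed.

Lemma run_inv s : complete_run E s -> Inv s.
Proof.
case: s => [//|r rest] /and4P[/eqP er sts dp _].
have := @steps_inv rest [::] r; rewrite /= => -> //.
rewrite er /Inv /= mem_seq1 eqxx /= andbT; apply/andP; split.
  by apply/forallP => i; rewrite inE.
rewrite !andbT; suff -> : score (bb_root n) = 0%N by []. 
apply/eqP; rewrite cards_eq0; apply/eqP/setP => i; rewrite !inE /=; by rewrite ltn0 ?andbF.
Qed.

Definition goodn : {set node n} := [set x | reach x && (score x <= #|D|)%N].

Lemma run_size s : complete_run E s -> (size s <= #|goodn|)%N.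
Proof.
move/run_inv => /and4P[_ rch sc un].
rewrite -(card_uniqP un); apply: subset_leq_card; apply/subsetP => x xs.
by rewrite inE (allP rch x xs) (allP sc x xs).
Qed.

Lemma bb_le : (bb_count E <= #|goodn|)%N.
Proof.
rewrite /bb_count; apply/bigmax_leqP => k /existsP[t ct].
by have := run_size ct; rewrite size_tuple.
Qed.

Lemma goodn_card : (#|goodn| <= n.+1 * #|[set S : {set 'I_n} | (#|S| <= #|D|)%N]|)%N.
Proof.
pose f (x : node n) := (x.2, [set i in x.1 | (val i < val x.2)%N]).
have fi : {in goodn &, injective f}.
  move=> x y; rewrite !inE => /andP[/forallP rx _] /andP[/forallP ry _].
  case: x rx => x1 x2; case: y ry => y1 y2 /= ry rx [e2 e1]; subst y2.
  congr pair; apply/setP => i.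
  have := congr1 (fun S : {set 'I_n} => i \in S) e1; rewrite !inE.
  case: (ltnP (val i) (val x2)) => h; rewrite ?andbT ?andbF //.
  by rewrite (implyP (rx i) h) (implyP (ry i) h).
rewrite -(card_in_imset fi).
have sub : f @: goodn \subset setX [set: 'I_n.+1] [set S : {set 'I_n} | (#|S| <= #|D|)%N].
  apply/subsetP => _ /imsetP[x xg ->].
  rewrite !inE /=; move: xg; rewrite inE => /andP[_]; exact.
by apply: (leq_trans (subset_leq_card sub)); rewrite cardsX cardsT card_ord.
Qed.

End Det.


Lemma Rplus_assoc' : associative Rplus. Proof. move=> *; rewrite Rplus_assoc //. Qed.
Lemma Rmult_assoc' : associative Rmult. Proof. move=> *; rewrite Rmult_assoc //. Qed.
HB.instance Definition _ := Monoid.isComLaw.Build R 0%Re Rplus Rplus_assoc' Rplus_comm Rplus_0_l.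
HB.instance Definition _ := Monoid.isComLaw.Build R 1%Re Rmult Rmult_assoc' Rmult_comm Rmult_1_l.
HB.instance Definition _ := Monoid.isMulLaw.Build R 0%Re Rmult Rmult_0_l Rmult_0_r.
HB.instance Definition _ := Monoid.isAddLaw.Build R Rmult Rplus Rmult_plus_distr_r Rmult_plus_distr_l.

Open Scope R_scope.

Lemma iter_pow (a : R) k : iter k (Rmult a) 1 = a ^ k.
Proof. by elim: k => //= k ->. Qed.

Lemma prod_if (I : finType) (A : {pred I}) (a : R) :
  \big[Rmult/1]_(i : I) (if i \in A then a else 1) = a ^ #|A|.
Proof. by rewrite -big_mkcond big_const iter_pow. Qed.

Lemma big_Rle (I : finType) (P : pred I) (F G : I -> R) :
  (forall i, P i -> F i <= G i) ->
  \big[Rplus/0]_(i | P i) F i <= \big[Rplus/0]_(i | P i) G i.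
Proof.
move=> H; apply: (big_ind2 (fun x y => x <= y)) => //; first lra.
by move=> *; apply: Rplus_le_compat.
Qed.

Lemma big_Rge0 (I : finType) (P : pred I) (F : I -> R) :
  (forall i, P i -> 0 <= F i) -> 0 <= \big[Rplus/0]_(i | P i) F i.
Proof.
move=> H; apply: (big_ind (fun x => 0 <= x)) => //; first lra.
by move=> *; apply: Rplus_le_le_0_compat.
Qed.

Lemma INR_sum (I : finType) (P : pred I) (F : I -> nat) :
  INR (\sum_(i | P i) F i) = \big[Rplus/0]_(i | P i) INR (F i).
Proof. by apply: (big_morph INR) => //; apply: plus_INR. Qed.

Lemma prod_pt (I : finType) (J X P : {set I}) (a b : R) :
  \big[Rmult/1]_(i : I) (if i \in J then (if i \in X then a else 0)
                          else (if i \in P then b else 1))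
  = if J \subset X then a ^ #|J| * b ^ #|P :\: J| else 0.
Proof.
case: ifP => JX.
  rewrite -!prod_if -big_split /=; apply: eq_bigr => i _.
  case: ifP => iJ; rewrite !inE iJ /=.
    by rewrite (subsetP JX _ iJ); lra.
  by lra.
case/subsetPn: JX => i iJ niX.
rewrite (bigD1 i) //= iJ (negbTE niX); lra.
Qed.

Lemma GL (I : finType) (X P : {set I}) (a b : R) :
  \big[Rplus/0]_(J : {set I} | J \subset X) (a ^ #|J| * b ^ #|P :\: J|)
  = \big[Rmult/1]_(i : I) ((if i \in X then a else 0) + (if i \in P then b else 1)).
Proof.
rewrite bigA_distr big_mkcond /=; apply: eq_bigr => J _.
by rewrite prod_pt.
Qed.

Lemma binom_sub (I : finType) (X : {set I}) (w : R) :
  \big[Rplus/0]_(J : {set I} | J \subset X) w ^ #|J| = (1 + w) ^ #|X|.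
Proof.
rewrite -prod_if.
have -> : \big[Rplus/0]_(J : {set I} | J \subset X) w ^ #|J| =
   \big[Rplus/0]_(J : {set I} | J \subset X) (w ^ #|J| * 0 ^ #|set0 :\: J|).
  by apply: eq_bigr => J _; rewrite set0D cards0 /= Rmult_1_r.
rewrite GL; apply: eq_bigr => i _; rewrite inE; case: ifP => _; lra.
Qed.

Lemma binom_all (I : finType) (w : R) :
  \big[Rplus/0]_(J : {set I}) w ^ #|J| = (1 + w) ^ #|I|.
Proof.
rewrite -cardsT -binom_sub; apply: eq_bigl => J; by rewrite subsetT.
Qed.

Lemma card_small (I : finType) (t : R) (k : nat) : 0 < t <= 1 ->
  INR #|[set S : {set I} | (#|S| <= k)%N]| <= (1 + t) ^ #|I| * (/ t) ^ k.
Proof.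
move=> ht.
rewrite -sum1_card INR_sum.
apply: Rle_trans (_ : \big[Rplus/0]_(S in [set S : {set I} | (#|S| <= k)%N]) (t ^ #|S| * (/t) ^ k) <= _).
  apply: big_Rle => S; rewrite inE => hS.
  rewrite -(subnKC hS) pow_add -Rmult_assoc -Rpow_mult_distr Rinv_r; last lra.
  rewrite pow1 Rmult_1_l /=; apply: pow_R1_Rle.
  rewrite -Rinv_1; apply: Rinv_le_contravar; lra.
rewrite -binom_all big_distrl /= big_mkcond /=; apply: big_Rle => S _.
case: ifP => _; first lra.
apply: Rmult_le_pos; apply: pow_le; first lra.
by apply: Rlt_le; apply: Rinv_0_lt_compat; lra.
Qed.

Lemma prob_avoid (I : finType) (P F : {set I}) (p : R) :
  \big[Rplus/0]_(E : {set I} | E \subset P :\: F) (p ^ #|E| * (1 - p) ^ (#|P| - #|E|))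
  = (1 - p) ^ #|F :&: P|.
Proof.
have -> : \big[Rplus/0]_(E : {set I} | E \subset P :\: F) (p ^ #|E| * (1 - p) ^ (#|P| - #|E|))
   = \big[Rplus/0]_(E : {set I} | E \subset P :\: F) (p ^ #|E| * (1 - p) ^ #|P :\: E|).
  apply: eq_bigr => E; rewrite subsetD => /andP[EP _].
  by rewrite cardsD (setIidPr EP).
rewrite GL -prod_if; apply: eq_bigr => i _; rewrite !inE.
by case: (i \in F); case: (i \in P) => /=; lra.
Qed.


Section Graph.
Variables (n s0 : nat).
Hypothesis hs0 : (s0 <= n)%N.

Definition SS : {set 'I_n} := [set i : 'I_n | (val i < s0)%N].

Lemma card_SS : #|SS| = s0.
Proof.
have -> : SS = [set widen_ord hs0 i | i : 'I_s0].
  apply/setP => i; rewrite inE; apply/idP/imsetP.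
    by move=> h; exists (Ordinal h) => //; apply: val_inj.
  by case=> j _ ->; rewrite /= ltn_ord.
rewrite card_imset ?card_ord //; move=> a b /(congr1 val) /= e; exact: val_inj.
Qed.

Definition UU (E : {set 'I_n * 'I_n}) : {set 'I_n} :=
  [set v : 'I_n | (v \notin SS) && ~~ [exists u in SS, adj E u v]].

Lemma dom_DD E : dominating E (SS :|: UU E).
Proof.
apply/forallP => v; case: (boolP (v \in SS)) => vS; first by rewrite in_setU vS.
case: (boolP [exists u in SS, adj E u v]) => [/existsP[u /andP[uS a]]|h].
  by apply/orP; right; apply/existsP; exists u; rewrite in_setU uS a.
by apply/orP; left; rewrite in_setU; apply/orP; right; rewrite /UU in_set vS h.
Qed.

Definition FF (J : {set 'I_n}) : {set 'I_n * 'I_n} :=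
  [set e in pairs n | ((e.1 \in J) && (e.2 \in SS)) || ((e.1 \in SS) && (e.2 \in J))].

Lemma FF_card (J : {set 'I_n}) : [disjoint J & SS] -> (#|J| * s0 <= #|FF J|)%N.
Proof.
move=> dJ.
pose g (x : 'I_n * 'I_n) := if (val x.1 < val x.2)%N then x else (x.2, x.1).
pose h (e : 'I_n * 'I_n) := if e.1 \in J then e else (e.2, e.1).
have hg : {in setX J SS, cancel g h}.
  case=> u v; rewrite inE /= => /andP[uJ vS].
  have vJ : v \notin J by rewrite (disjointFl dJ vS).
  rewrite /g /h /=; case: ltnP => _ /=; by rewrite ?uJ ?(negbTE vJ).
have gi : {in setX J SS &, injective g}.
  by move=> x y xi yi e; rewrite -(hg x xi) -(hg y yi) e.
rewrite -card_SS -cardsX -(card_in_imset gi); apply: subset_leq_card.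
apply/subsetP => _ /imsetP[[u v] /[!inE] /= /andP[uJ vS] ->].
have uS : u \notin SS by rewrite (disjointFr dJ uJ).
have nuv : val u != val v by apply/negP => /eqP /val_inj e; move: uS; rewrite e !inE vS.
have uS' : (val u < s0)%N = false by apply/negbTE; move: uS; rewrite inE.
rewrite /g /=; case: ifP => huv /=.
  by apply/andP; split; [exact: huv| rewrite uJ vS].
have vu : (val v < val u)%N by rewrite ltn_neqAle eq_sym nuv leqNgt huv.
by apply/andP; split; [exact: vu| rewrite uJ vS orbT].
Qed.
End Graph.

Section Main.
Variables (n s0 : nat).
Hypothesis hs0 : (s0 <= n)%N.
Open Scope R_scope.

Lemma UU_SS (E : {set 'I_n * 'I_n}) (J : {set 'I_n}) : J \subset UU s0 E -> [disjoint J & @SS n s0].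
Proof.
move=> JU; apply/pred0P => i /=; apply/negbTE/negP => /andP[iJ iS].
by move: (subsetP JU _ iJ); rewrite /UU in_set iS.
Qed.

Lemma avoid (E : {set 'I_n * 'I_n}) (J : {set 'I_n}) : E \subset pairs n -> J \subset UU s0 E ->
  E \subset pairs n :\: FF s0 J.
Proof.
move=> EP JU; apply/subsetP => -[a b] eE; rewrite in_setD (subsetP EP _ eE) andbT.
apply/negP; rewrite /FF in_set => /andP[_ /orP[/andP[aJ bS]|/andP[aS bJ]]] /=.
  move: (subsetP JU _ aJ); rewrite /UU in_set => /andP[_ /existsP]; apply.
  by exists b; rewrite bS /adj eE orbT.
move: (subsetP JU _ bJ); rewrite /UU in_set => /andP[_ /existsP]; apply.
by exists a; rewrite aS /adj eE.
Qed.

Lemma pow_le1 (x : R) k : 0 <= x <= 1 -> x ^ k <= 1.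
Proof.
move=> hx; elim: k => [|k IH] /=; first lra.
have : 0 <= x ^ k by apply: pow_le; lra.
nra.
Qed.

Lemma pow_decr (x : R) a b : 0 <= x <= 1 -> (a <= b)%N -> x ^ b <= x ^ a.
Proof.
move=> hx hab; rewrite -(subnKC hab) pow_add.
have h1 := pow_le1 (b - a) hx; have h2 : 0 <= x ^ a by apply: pow_le; lra.
nra.
Qed.

Lemma gnp_ge0 p (E : {set 'I_n * 'I_n}) : 0 <= p <= 1 -> 0 <= gnp_prob p E.
Proof. move=> hp; rewrite /gnp_prob; apply: Rmult_le_pos; apply: pow_le; lra. Qed.

Lemma stepA t (E : {set 'I_n * 'I_n}) : 0 < t <= 1 ->
  INR (bb_count E) <= INR n.+1 * (1 + t) ^ n * (/ t) ^ s0 *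
     \big[Rplus/0]_(J : {set 'I_n} | J \subset UU s0 E) (/ t - 1) ^ #|J|.
Proof.
move=> ht.
have h1 := bb_le (dom_DD s0 E).
have h2 := goodn_card (SS n s0 :|: UU s0 E).
have h3 : (#|[set S : {set 'I_n} | (#|S| <= #|SS n s0 :|: UU s0 E|)%N]| <=
           #|[set S : {set 'I_n} | (#|S| <= s0 + #|UU s0 E|)%N]|)%N.
  apply: subset_leq_card; apply/subsetP => S; rewrite !inE => hS.
  apply: (leq_trans hS); apply: (@leq_trans (#|SS n s0| + #|UU s0 E|)); first by rewrite cardsU leq_subr.
  by rewrite (card_SS hs0).
have h4 : (bb_count E <= n.+1 * #|[set S : {set 'I_n} | (#|S| <= s0 + #|UU s0 E|)%N]|)%N.
  apply: (leq_trans h1); apply: (leq_trans h2); exact: leq_mul.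
apply: Rle_trans; first by apply: le_INR; apply/leP; exact: h4.
rewrite mult_INR.
have := card_small ('I_n) (s0 + #|UU s0 E|) ht; rewrite card_ord => h5.
rewrite binom_sub.
have -> : 1 + (/ t - 1) = / t by lra.
rewrite !Rmult_assoc; apply: Rmult_le_compat_l; first by apply: pos_INR.
by rewrite -pow_add.
Qed.

Lemma stepC p t (J : {set 'I_n}) : 0 <= p <= 1 -> 0 < t <= 1 ->
  \big[Rplus/0]_(E : {set 'I_n * 'I_n} | E \subset pairs n)
     (gnp_prob p E * (if J \subset UU s0 E then (/ t - 1) ^ #|J| else 0))
  <= ((/ t - 1) * (1 - p) ^ s0) ^ #|J|.
Proof.
move=> hp ht.
have hw : 0 <= / t - 1.
  have : 1 <= / t by rewrite -Rinv_1; apply: Rinv_le_contravar; lra.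
  lra.
have hq : 0 <= (1 - p) ^ s0 by apply: pow_le; lra.
have hwq : 0 <= ((/ t - 1) * (1 - p) ^ s0) ^ #|J| by apply: pow_le; nra.
case: (boolP [disjoint J & SS n s0]) => dJ; last first.
  rewrite big1 // => E _; case: ifP => [/UU_SS h|_]; last lra.
  by rewrite h in dJ.
apply: Rle_trans (_ : \big[Rplus/0]_(E : {set 'I_n * 'I_n} | E \subset pairs n :\: FF s0 J)
     (gnp_prob p E * (/ t - 1) ^ #|J|) <= _).
  rewrite big_mkcond [X in _ <= X]big_mkcond /=; apply: big_Rle => E _.
  case: (boolP (E \subset pairs n)) => EP.
    case: ifP => JU.
      by rewrite (avoid EP JU); lra.
    case: ifP => _; rewrite Rmult_0_r; last lra.
    apply: Rmult_le_pos; first exact: gnp_ge0.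
    by apply: pow_le.
  case: ifP => _; last lra.
  apply: Rmult_le_pos; first exact: gnp_ge0.
  by apply: pow_le.
rewrite -big_distrl /= /gnp_prob.
have -> : \big[Rplus/0]_(E : {set 'I_n * 'I_n} | E \subset pairs n :\: FF s0 J)
          (p ^ #|E| * (1 - p) ^ (#|pairs n| - #|E|)) = (1 - p) ^ #|FF s0 J :&: pairs n|
  by apply: prob_avoid.
rewrite (setIidPl _); last by apply/subsetP => e; rewrite in_set => /andP[].
rewrite Rpow_mult_distr Rmult_comm; apply: Rmult_le_compat_l.
  by apply: pow_le.
rewrite -pow_mult; apply: pow_decr; first lra.
by rewrite multE mulnC; apply: FF_card.
Qed.

Lemma T_bound p t : 0 <= p <= 1 -> 0 < t <= 1 ->
  T_bb n p <= INR n.+1 * (1 + t) ^ n * (/ t) ^ s0 * (1 + (/ t - 1) * (1 - p) ^ s0) ^ n.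
Proof.
move=> hp ht.
set C := INR n.+1 * (1 + t) ^ n * (/ t) ^ s0.
rewrite /T_bb /expect_gnp.
apply: Rle_trans (_ : \big[Rplus/0]_(E : {set 'I_n * 'I_n} | E \subset pairs n)
   (gnp_prob p E * (C * \big[Rplus/0]_(J : {set 'I_n} | J \subset UU s0 E) (/ t - 1) ^ #|J|)) <= _).
  apply: big_Rle => E _; apply: Rmult_le_compat_l; first exact: gnp_ge0.
  exact: stepA.
have -> : \big[Rplus/0]_(E : {set 'I_n * 'I_n} | E \subset pairs n)
   (gnp_prob p E * (C * \big[Rplus/0]_(J : {set 'I_n} | J \subset UU s0 E) (/ t - 1) ^ #|J|))
   = C * \big[Rplus/0]_(J : {set 'I_n}) \big[Rplus/0]_(E : {set 'I_n * 'I_n} | E \subset pairs n)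
     (gnp_prob p E * (if J \subset UU s0 E then (/ t - 1) ^ #|J| else 0)).
  rewrite [in RHS]exchange_big /= [in RHS]big_distrr /=; apply: eq_bigr => E _.
  rewrite big_mkcond /=.
rewrite -Rmult_assoc (Rmult_comm (gnp_prob p E) C) Rmult_assoc; congr (C * _).
rewrite big_distrr /=.
  by apply: eq_bigr.
apply: Rmult_le_compat_l.
  rewrite /C; apply: Rmult_le_pos; [apply: Rmult_le_pos|].
  - exact: pos_INR.
  - apply: pow_le; lra.
  - apply: pow_le; apply: Rlt_le; apply: Rinv_0_lt_compat; lra.
have -> : (1 + (/ t - 1) * (1 - p) ^ s0) ^ n = \big[Rplus/0]_(J : {set 'I_n}) ((/ t - 1) * (1 - p) ^ s0) ^ #|J| by rewrite binom_all card_ord.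
by apply: big_Rle => J _; apply: stepC.
Qed.

End Main.

Open Scope R_scope.

Lemma exp_le_mono x y : x <= y -> exp x <= exp y.
Proof.
move=> h; case: (Rle_lt_or_eq_dec _ _ h) => [h'|->]; last lra.
by apply: Rlt_le; apply: exp_increasing.
Qed.

Lemma exp_powR x k : exp x ^ k = exp (x * INR k).
Proof.
elim: k => [|k IH]; first by rewrite /= Rmult_0_r exp_0.
change (exp x ^ k.+1) with (exp x * exp x ^ k).
rewrite IH -exp_plus; congr exp; rewrite S_INR; ring.
Qed.

Lemma bern_sq h k : 0 <= h -> 1 + INR k * h + INR k * (INR k - 1) / 2 * h ^ 2 <= (1 + h) ^ k.
Proof.
move=> hh; elim: k => [|k IH]; first by simpl; lra.
rewrite S_INR /=.
have hk : 0 <= INR k by apply: pos_INR.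
have : 0 <= INR k * (INR k - 1) / 2 * h ^ 3 \/ k = 0%N.
  case: k IH hk => [|k] IH hk; [by right|left].
  rewrite S_INR; have := pos_INR k => hk'.
  apply: Rmult_le_pos; last by apply: pow_le.
  nra.
case=> [h3|->]; last by simpl; nra.
have : (1 + h) * (1 + INR k * h + INR k * (INR k - 1) / 2 * h ^ 2) <= (1 + h) * (1 + h) ^ k.
  by apply: Rmult_le_compat_l; lra.
simpl in h3 |- *; nra.
Qed.

Lemma poly_exp r : 1 < r -> exists N : nat, forall n : nat, (N <= n)%N -> INR n.+1 <= r ^ n.
Proof.
move=> hr; set h := r - 1.
have hh : 0 < h by rewrite /h; lra.
have [N HN] := INR_unbounded (1 + 4 / (h * h)).
exists N.+1 => n hn.
have hn' : INR N.+1 <= INR n by apply: le_INR; apply/leP.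
rewrite S_INR in hn'.
have := bern_sq n (Rlt_le _ _ hh); rewrite (_ : 1 + h = r); last by rewrite /h; ring.
move=> hb; apply: Rle_trans hb.
have h4 : 4 / (h * h) * (h * h) = 4 by field; lra.
have hn2 : (INR n - 1) * (h * h) >= 4.
  have : 4 / (h * h) < INR n - 1 by lra.
  move=> hlt; have : 0 < h * h by nra.
  nra.
rewrite S_INR; simpl.
have : 0 <= INR n * h by apply: Rmult_le_pos; [apply: pos_INR| lra].
nra.
Qed.

Lemma Fin (p : nat -> R) (rho sig t v : R) (K N0 : nat) :
  1 < rho -> 0 < sig < rho -> 0 < t <= 1 -> 1 <= v -> (0 < K)%N -> / t <= v ^ K ->
  (forall n, (N0 <= n)%N -> 0 <= p n <= 1 /\
      (1 + t) * v * (1 + (/ t - 1) * (1 - p n) ^ (n %/ K)) <= sig) ->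
  exists N, forall n, (N <= n)%N -> T_bb n (p n) <= rho ^ n.
Proof.
move=> hr hs ht hv hK hvK H.
have hrs : 1 < rho / sig.
  apply: (Rmult_lt_reg_r sig); first lra.
  rewrite Rmult_1_l /Rdiv Rmult_assoc Rinv_l; lra.
have [N1 H1] := poly_exp hrs.
exists (maxn N0 N1) => n; rewrite geq_max => /andP[hn0 hn1].
have [hp hb] := H n hn0.
have hsn : (n %/ K <= n)%N by apply: leq_div.
apply: Rle_trans; first exact: (T_bound hsn (t := t) hp ht).
have hit : 1 <= / t by rewrite -Rinv_1; apply: Rinv_le_contravar; lra.
have hq : 0 <= (1 - p n) ^ (n %/ K) by apply: pow_le; lra.
set B := 1 + (/ t - 1) * (1 - p n) ^ (n %/ K).
have hB : 0 <= B by rewrite /B; nra.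
have e1 : (/ t) ^ (n %/ K) <= v ^ n.
  apply: Rle_trans (_ : (v ^ K) ^ (n %/ K) <= _).
    by apply: pow_incr; lra.
  rewrite -pow_mult; apply: Rle_pow => //; apply/leP.
  by rewrite multE mulnC; apply: leq_trunc_div.
have e2 : INR n.+1 * (1 + t) ^ n * (/ t) ^ (n %/ K) * B ^ n <= INR n.+1 * sig ^ n.
  rewrite !Rmult_assoc; apply: Rmult_le_compat_l; first exact: pos_INR.
  apply: Rle_trans (_ : (1 + t) ^ n * (v ^ n * B ^ n) <= _).
    apply: Rmult_le_compat_l; first by apply: pow_le; lra.
    apply: Rmult_le_compat_r; first by apply: pow_le.
    exact: e1.
  rewrite -!Rpow_mult_distr -Rmult_assoc; apply: pow_incr; split => //.
  apply: Rmult_le_pos; [apply: Rmult_le_pos|]; lra.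
apply: Rle_trans e2 _.
have := H1 n hn1; rewrite Rpow_mult_distr => h.
have hsig : 0 <= sig ^ n by apply: pow_le; lra.
apply: Rle_trans (_ : rho ^ n * (/ sig) ^ n * sig ^ n <= _).
  by apply: Rmult_le_compat_r.
rewrite Rmult_assoc -Rpow_mult_distr Rinv_l; last lra.
rewrite pow1; lra.
Qed.

Lemma q_exp p s : 0 <= p <= 1 -> (1 - p) ^ s <= exp (- (p * INR s)).
Proof.
move=> hp; apply: Rle_trans (_ : exp (- p) ^ s <= _).
  apply: pow_incr; split; first lra.
  have := exp_ineq1_le (- p); lra.
rewrite exp_powR; apply: exp_le_mono; lra.
Qed.

Lemma divK_bound n K : (0 < K)%N -> INR n - INR K <= INR (n %/ K) * INR K.
Proof.
move=> hK; have e := divn_eq n K; have lt := ltn_pmod n hK.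
have : (n <= n %/ K * K + K)%N by rewrite {1}e leq_add2l ltnW.
move/leP/le_INR; rewrite plus_INR mult_INR; lra.
Qed.

Lemma part_b (c : R) : 20 <= c ->
  exists eps : R, 1 / 100 <= eps /\
    exists N : nat, forall n : nat, (N <= n)%N -> T_bb n (c / INR n) <= (2 - eps) ^ n.
Proof.
move=> hc; exists (1 / 100); split; first lra.
replace (2 - 1 / 100) with (199 / 100) by field.
have [N0 HN0] := INR_unbounded (c + 15).
apply: (@Fin (fun n => c / INR n) (199/100) (19/10) (1/2) (119/100) 4 N0) => //; try lra.
move=> n hn.
have hnR : c + 15 < INR n.
  apply: Rlt_le_trans (_ : INR N0 <= _); [lra|by apply: le_INR; apply/leP].
have hn0 : 0 < INR n by lra.
have hp : 0 <= c / INR n <= 1.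
  split; first by apply: Rmult_le_pos; [lra| apply: Rlt_le; apply: Rinv_0_lt_compat].
  apply: (Rmult_le_reg_r (INR n)) => //; rewrite /Rdiv Rmult_assoc Rinv_l; lra.
split => //.
have hs := divK_bound n (isT : (0 < 4)%N).
have hs4 : INR 4 = 4 by simpl; ring.
rewrite hs4 in hs.
have hps : 4 <= c / INR n * INR (n %/ 4).
  apply: (Rmult_le_reg_r (INR n)) => //.
  have -> : c / INR n * INR (n %/ 4) * INR n = c * INR (n %/ 4) by field; lra.
  have := pos_INR (n %/ 4); nra.
have e1 : exp 1 ^ 4 = exp 4 by rewrite exp_powR; congr exp; simpl; ring.
have e2 : 2 <= exp 1 by have := exp_ineq1_le 1; lra.
have e4 : 16 <= exp 4.
  rewrite -e1; have -> : 16 = 2 ^ 4 by simpl; ring.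
  by apply: pow_incr; lra.
have hq : (1 - c / INR n) ^ (n %/ 4) <= / 16.
  apply: Rle_trans; first exact: q_exp.
  apply: Rle_trans (_ : exp (- 4) <= _); first by apply: exp_le_mono; lra.
  rewrite exp_Ropp; apply: Rinv_le_contravar => //; lra.
have hq0 : 0 <= (1 - c / INR n) ^ (n %/ 4) by apply: pow_le; lra.
rewrite (_ : / (1 / 2) - 1 = 1); last by field.
lra.
Qed.

Lemma part_a (p : nat -> R) :
  (forall n : nat, 0 <= p n <= 1) ->
  (forall M : R, exists N : nat, forall n : nat, (N <= n)%N -> M <= p n * INR n) ->
  forall delta : R, 0 < delta ->
    exists N : nat, forall n : nat, (N <= n)%N -> T_bb n (p n) <= Rpower 2 (delta * INR n).
Proof.
move=> hp hpn delta hd.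
set rho := Rpower 2 delta.
have hr : 1 < rho.
  rewrite /rho -(Rpower_O 2); last lra.
  by apply: Rpower_lt; lra.
have hr0 : 0 < rho by rewrite /rho /Rpower; apply: exp_pos.
set sig := (1 + rho) / 2.
set eta := Rmin 1 ((sig - 1) / 7).
have he0 : 0 < eta by rewrite /eta; apply: Rmin_glb_lt; rewrite /sig; lra.
have he1 : eta <= 1 by apply: Rmin_l.
have he2 : eta <= (sig - 1) / 7 by apply: Rmin_r.
have [K HK] := INR_unbounded (/ (eta * eta)).
have hee : 0 < / (eta * eta) by apply: Rinv_0_lt_compat; nra.
have hKp : (0 < K)%N.
  case: K HK => [|K] //= HK; lra.
have hK1 : 1 <= INR K by have := le_INR 1 K; apply; apply/leP.
have [N0 HN0] := hpn (INR K * (1 - 2 * ln eta)).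
suff : exists N : nat, forall n : nat, (N <= n)%N -> T_bb n (p n) <= rho ^ n.
  case=> N HN; exists N => n hn; rewrite -Rpower_mult Rpower_pow //; exact: HN.
apply: (@Fin p rho sig eta (1 + eta) K N0) => //; try (rewrite /sig; lra); try lra.
  have := bern_sq K (Rlt_le _ _ he0).
  have h1 : INR K * eta > / eta.
    have : INR K * (eta * eta) > 1.
      have h0 : 0 < eta * eta by nra.
      have := Rmult_lt_compat_r (eta * eta) _ _ h0 HK.
      rewrite Rinv_l; [lra|nra].
    move=> h; apply: (Rmult_lt_reg_r eta) => //.
    rewrite Rinv_l; nra.
  have : 0 <= INR K * (INR K - 1) / 2 * eta ^ 2.
    apply: Rmult_le_pos; last by apply: pow_le; lra.
    nra.
  lra.
move=> n hn; split => //.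
have hq := q_exp (n %/ K) (hp n).
have hs := divK_bound n hKp.
have HN := HN0 n hn.
have hpn1 := hp n.
have hln : - (2 * ln eta) <= p n * INR (n %/ K).
  apply: (Rmult_le_reg_r (INR K)); first lra.
  have : p n * INR K <= INR K by nra.
  nra.
have hq2 : (1 - p n) ^ (n %/ K) <= eta * eta.
  apply: Rle_trans hq _.
  apply: Rle_trans (_ : exp (ln eta + ln eta) <= _).
    by apply: exp_le_mono; lra.
  by rewrite exp_plus exp_ln //; lra.
have hq0 : 0 <= (1 - p n) ^ (n %/ K) by apply: pow_le; lra.
have hw : (/ eta - 1) * (1 - p n) ^ (n %/ K) <= eta.
  have : / eta * (1 - p n) ^ (n %/ K) <= / eta * (eta * eta).
    apply: Rmult_le_compat_l => //; apply: Rlt_le; apply: Rinv_0_lt_compat; lra.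
  rewrite (_ : / eta * (eta * eta) = eta); last by field; lra.
  lra.
have hw0 : 0 <= (/ eta - 1) * (1 - p n) ^ (n %/ K).
  apply: Rmult_le_pos => //.
  have : 1 <= / eta by rewrite -Rinv_1; apply: Rinv_le_contravar; lra.
  lra.
have : (1 + eta) * (1 + eta) * (1 + (/ eta - 1) * (1 - p n) ^ (n %/ K))
       <= (1 + eta) * (1 + eta) * (1 + eta).
  apply: Rmult_le_compat_l; nra.
nra.
Qed.

Close Scope R_scope.

Theorem theorem1 :
  (* (a) pn -> infinity implies T(n,p) = 2^{o(n)} *)
  (forall p : nat -> R,
     (forall n : nat, (0 <= p n <= 1)%Re) ->
     (forall M : R, exists N : nat, forall n : nat,
          (N <= n)%N -> (M <= p n * INR n)%Re) ->
     forall delta : R, (0 < delta)%Re ->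
       exists N : nat, forall n : nat,
         (N <= n)%N -> (T_bb n (p n) <= Rpower 2 (delta * INR n))%Re)
  /\
  (* (b) p = c/n with constant c >= 20 *)
  (forall c : R, (20 <= c)%Re ->
     exists eps : R, (1 / 100 <= eps)%Re /\
       exists N : nat, forall n : nat,
         (N <= n)%N -> (T_bb n (c / INR n) <= pow (2 - eps) n)%Re).
Proof.
split.
- exact: part_a.
- exact: part_b.
Qed.
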